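(* The category $\mathbb S^{\mathrm{m},\mathbb P}_r$ is a traced symmetric monoidal category.
   Context: Notation: $[k]=\{1,\dots,k\}$; $T(X)=X+\mathbb R\times X+\{\exists^*,\forall^*\}$; diagrammatic composition. $\mathbb S^{\mathrm{m},\mathbb P}_r$ (meager semantic category for plays) has natural numbers as objects; an arrow $f:m\to n$ is a function $f:[m]\to T([n])$ satisfying realizability: for all $i\ne j$ in $[m]$, $f(i)\notin[n]$ or $f(j)\notin\{f(i)\}\cup\mathbb R\times\{f(i)\}$. Its hom-sets are ordered pointwise by the least order $\le$ on $T([n])$ with $(r_1,i)\le(r_2,i)$ whenever $r_1\ge r_2$, $\exists^*\le z$ and $z\le\forall^*$ for all $z$. Its operations are: composition of $f:m\to l$, $g:l\to n$: $(f;g)(i)=f(i)$ if $f(i)\in\{\exists^*,\forall^*\}$; $g(j)$ if $f(i)=j\in[l]$; $g(j)$ if $f(i)=(r,j)$ and $g(j)\in\{\exists^*,\forall^*\}$; $(r,k)$ if $f(i)=(r,j)$, $g(j)=k$; $(r+r',k)$ if $f(i)=(r,j)$, $g(j)=(r',k)$. $\mathrm{id}(i)=i$; $\sigma_{m,n}(i)=n+i$ ($i\le m$), $\sigma_{m,n}(m+j)=j$; $(f\oplus g)(i)=f(i)$ ($i\le m$), $(f\oplus g)(m+i)$ is $g(i)$ with its index $j$ (if any) shifted to $n+j$ (for $f:m\to n$). Trace of $f:l+m\to l+n$ at $i\in[m]$: $v_0=l+i$; if $j=0$ or $v_j\in[l]$ then $v_{j+1}=f(v_j)$; if $v_j=(r,k)$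 with $k\in[l]$ then $v_{j+1}=f(k)$; otherwise stop at $v_j$. If finite $(v_0,..,v_K)$ and $S$ is the sum of first components of $v_j\in\mathbb R\times[l+n]$, $1\le j\le K$: value $v_K$ if $v_K\in\{\exists^*,\forall^*\}$; $k$ if $v_K=l+k$ and $v_j\in[l]$ for $1\le j<K$; $(S,k)$ if $v_K=l+k$ and some earlier $v_j\in\mathbb R\times[l]$; $(S,k)$ if $v_K=(r,l+k)$. If infinite, with $w'_1,w'_2,..$ the first components of the (infinitely many) entries in $\mathbb R\times[l]$: $\exists^*$ if $\liminf_N\frac1N\sum_{t\le N}w'_t\ge0$, else $\forall^*$. *)

(* Defs.v *)
From mathcomp Require Import ssreflect ssrfun ssrbool eqtype ssrnat.
From Stdlib Require Import Reals ClassicalEpsilon.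
From Coquelicot Require Import Rbar Lim_seq.

Set Implicit Arguments.
Unset Strict Implicit.
Unset Printing Implicit Defensive.
Local Open Scope nat_scope.

(* T(X) = X + R x X + {exists*, forall*}, with X = [n] = {1,..,n} encoded by *)
(* natural numbers (1-based, as in the paper).                              *)
Inductive Tv : Type :=
| Ix of nat
| Wt of R & nat
| ExS
| FaS.

Definition in_range (n k : nat) : bool := (0 < k <= n).

Definition wf_T (n : nat) (v : Tv) : Prop :=
  match v with
  | Ix k => in_range n k
  | Wt _ k => in_range n k
  | _ => True
  end.

(* An arrow m -> n of S^{m,P}_r is a function [m] -> T([n]); we represent it *)
(* by any f : nat -> Tv, only its values on [m] = {1..m} being relevant.     *)
Definition realizable (m : nat) (f : nat -> Tv) : Prop :=
  forall i j, in_range m i -> in_range m j -> i <> j ->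
    forall k, f i = Ix k -> (f j <> Ix k /\ forall r, f j <> Wt r k).

Definition is_arrow (m n : nat) (f : nat -> Tv) : Prop :=
  (forall i, in_range m i -> wf_T n (f i)) /\ realizable m f.

Definition eq_arrow (m : nat) (f g : nat -> Tv) : Prop :=
  forall i, in_range m i -> f i = g i.

Definition compS (f g : nat -> Tv) : nat -> Tv := fun i =>
  match f i with
  | ExS => ExS
  | FaS => FaS
  | Ix j => g j
  | Wt r j =>
      match g j with
      | ExS => ExS
      | FaS => FaS
      | Ix k => Wt r k
      | Wt r' k => Wt (r + r')%R k
      end
  end.

Definition idS (m : nat) : nat -> Tv := fun i => Ix i.

Definition sigmaS (m n : nat) : nat -> Tv := fun i =>
  if i <= m then Ix (n + i) else Ix (i - m).

Definition shiftT (n : nat) (v : Tv) : Tv :=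
  match v with
  | Ix j => Ix (n + j)
  | Wt r j => Wt r (n + j)
  | ExS => ExS
  | FaS => FaS
  end.

(* tensor f (+) g, for f : m -> n (and g : m' -> n') *)
Definition tensorS (m n : nat) (f g : nat -> Tv) : nat -> Tv := fun i =>
  if i <= m then f i else shiftT n (g (i - m)).

(* Trace of f : l + m -> l + n at i in [m].                                 *)
Section Trace.
Variables (l n : nat) (f : nat -> Tv) (i : nat).

Definition tr_cont (j : nat) (v : Tv) : bool :=
  (j == 0) ||
  match v with
  | Ix k => in_range l k
  | Wt _ k => in_range l k
  | _ => false
  end.

Fixpoint tr_walk (j : nat) : Tv :=
  match j with
  | 0 => Ix (l + i)
  | S j' =>
      let v := tr_walk j' in
      if tr_cont j' v then
        match v with
        | Ix k => f k
        | Wt _ k => f k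
        | _ => v
        end
      else v
  end.

Definition tr_stop (j : nat) : bool := ~~ tr_cont j (tr_walk j).

Definition tr_wl (j : nat) : bool :=
  match tr_walk j with
  | Wt _ k => in_range l k
  | _ => false
  end.

Definition weight (v : Tv) : R := match v with Wt r _ => r | _ => 0%R end.

Fixpoint psum (a : nat -> R) (K : nat) : R :=
  match K with 0 => 0%R | S K' => (psum a K' + a K)%R end.

Fixpoint has_wl_before (K : nat) : bool :=
  match K with 0 => false | S K' => has_wl_before K' || ((0 < K') && tr_wl K') end.

Definition tr_fin_value (K : nat) : Tv :=
  let S := psum (fun j => weight (tr_walk j)) K in
  match tr_walk K with
  | ExS => ExS
  | FaS => FaS
  | Ix k => if has_wl_before K then Wt S (k - l) else Ix (k - l)
  | Wt _ k => Wt S (k - l)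
  end.

(* least j >= a with v_j in R x [l] (0 if none: not used for realizable f) *)
Definition next_wl (a : nat) : nat :=
  match excluded_middle_informative (exists j, (a <= j) && tr_wl j) with
  | left H => ex_minn H
  | right _ => 0
  end.

(* positions p_1 < p_2 < ... of the entries in R x [l] (0-indexed here) *)
Fixpoint wl_pos (t : nat) : nat :=
  match t with
  | 0 => next_wl 1
  | S t' => next_wl (wl_pos t').+1
  end.

Definition wprime (t : nat) : R := weight (tr_walk (wl_pos t)).

Fixpoint wsum (N : nat) : R :=
  match N with 0 => 0%R | S N' => (wsum N' + wprime N')%R end.

(* (1/N) sum_{t <= N} w'_t, indexed by N-1 *)
Definition wavg (N : nat) : R := (wsum N.+1 / INR N.+1)%R.

Definition tr_inf_value : Tv :=
  match excluded_middle_informative (Rbar_le (Finite 0%R) (LimInf_seq wavg)) with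
  | left _ => ExS
  | right _ => FaS
  end.

Definition trace_at : Tv :=
  match excluded_middle_informative (exists K, tr_stop K) with
  | left H => tr_fin_value (ex_minn H)
  | right _ => tr_inf_value
  end.

End Trace.

(* Tr^l(f) : m -> n for f : l + m -> l + n *)
Definition trS (l n : nat) (f : nat -> Tv) : nat -> Tv := fun i => trace_at l f i.

(* Strict traced symmetric monoidal category with objects nat, tensor on   *)
(* objects m (+) n = m + n and unit 0 (associators/unitors are identities), *)
(* tensor m n f g : f (+) g  where f : m -> n;  tr l n f : Tr^l(f) where    *)
(* f : l + m -> l + n.  Trace axioms: Joyal-Street-Verity.                  *)
Record is_traced_smc (A : Type)
    (arrow : nat -> nat -> A -> Prop) (eqA : nat -> A -> A -> Prop)
    (id : nat -> A) (comp : A -> A -> A)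
    (tensor : nat -> nat -> A -> A -> A) (sigma : nat -> nat -> A)
    (tr : nat -> nat -> A -> A) : Prop := {
  eqA_refl : forall m f, eqA m f f;
  eqA_sym : forall m f g, eqA m f g -> eqA m g f;
  eqA_trans : forall m f g h, eqA m f g -> eqA m g h -> eqA m f h;
  arrow_eqA : forall m n f g, arrow m n f -> eqA m f g -> arrow m n g;
  id_arrow : forall m, arrow m m (id m);
  comp_arrow : forall m l n f g, arrow m l f -> arrow l n g -> arrow m n (comp f g);
  comp_eqA : forall m l n f f' g g', arrow m l f -> arrow l n g ->
      eqA m f f' -> eqA l g g' -> eqA m (comp f g) (comp f' g');
  comp_id_l : forall m n f, arrow m n f -> eqA m (comp (id m) f) f;
  comp_id_r : forall m n f, arrow m n f -> eqA m (comp f (id n)) f;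
  comp_assoc : forall m l k n f g h, arrow m l f -> arrow l k g -> arrow k n h ->
      eqA m (comp (comp f g) h) (comp f (comp g h));
  tensor_arrow : forall m n m' n' f g, arrow m n f -> arrow m' n' g ->
      arrow (m + m') (n + n') (tensor m n f g);
  tensor_eqA : forall m n m' n' f f' g g', arrow m n f -> arrow m' n' g ->
      eqA m f f' -> eqA m' g g' -> eqA (m + m') (tensor m n f g) (tensor m n f' g');
  tensor_id : forall m m', eqA (m + m') (tensor m m (id m) (id m')) (id (m + m'));
  tensor_comp : forall m l n m' l' n' f g f' g',
      arrow m l f -> arrow l n g -> arrow m' l' f' -> arrow l' n' g' ->
      eqA (m + m') (tensor m n (comp f g) (comp f' g'))
                   (comp (tensor m l f f') (tensor l n g g'));
  tensor_assoc : forall m n m' n' m'' n'' f g h,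
      arrow m n f -> arrow m' n' g -> arrow m'' n'' h ->
      eqA (m + m' + m'') (tensor (m + m') (n + n') (tensor m n f g) h)
                         (tensor m n f (tensor m' n' g h));
  tensor_unit_l : forall m n f, arrow m n f -> eqA m (tensor 0 0 (id 0) f) f;
  tensor_unit_r : forall m n f, arrow m n f -> eqA m (tensor m n f (id 0)) f;
  sigma_arrow : forall m n, arrow (m + n) (n + m) (sigma m n);
  sigma_natural : forall m n m' n' f g, arrow m n f -> arrow m' n' g ->
      eqA (m + m') (comp (tensor m n f g) (sigma n n'))
                   (comp (sigma m m') (tensor m' n' g f));
  sigma_invol : forall m n, eqA (m + n) (comp (sigma m n) (sigma n m)) (id (m + n));
  sigma_hexagon : forall m n p,
      eqA (m + n + p) (sigma m (n + p))
          (comp (tensor (m + n) (n + m) (sigma m n) (id p))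
                (tensor n n (id n) (sigma m p)));
  tr_arrow : forall l m n f, arrow (l + m) (l + n) f -> arrow m n (tr l n f);
  tr_eqA : forall l m n f f', arrow (l + m) (l + n) f -> eqA (l + m) f f' ->
      eqA m (tr l n f) (tr l n f');
  tr_natural : forall l m n m' n' f g h,
      arrow (l + m) (l + n) f -> arrow m' m g -> arrow n n' h ->
      eqA m' (tr l n' (comp (comp (tensor l l (id l) g) f) (tensor l l (id l) h)))
             (comp (comp g (tr l n f)) h);
  tr_dinatural : forall l l' m n f k,
      arrow (l + m) (l' + n) f -> arrow l' l k ->
      eqA m (tr l n (comp f (tensor l' l k (id n))))
            (tr l' n (comp (tensor l' l k (id m)) f));
  tr_vanish0 : forall m n f, arrow m n f -> eqA m (tr 0 n f) f;
  tr_vanish2 : forall l l' m n f, arrow (l + l' + m) (l + l' + n) f ->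
      eqA m (tr (l + l') n f) (tr l' n (tr l (l' + n) f));
  tr_superpose : forall l m n m' n' f g,
      arrow (l + m) (l + n) f -> arrow m' n' g ->
      eqA (m + m') (tensor m n (tr l n f) g)
                   (tr l (n + n') (tensor (l + m) (l + n) f g));
  tr_yanking : forall l, eqA l (tr l l (sigma l l)) (id l)
}.

(* Main.v *)
Require Import Defs.
From mathcomp Require Import ssreflect ssrfun ssrbool eqtype ssrnat seq div.
From mathcomp Require Import zify.
From Stdlib Require Import Reals Lra ClassicalEpsilon.
From Coquelicot Require Import Rbar Lim_seq.
Set Implicit Arguments. Unset Strict Implicit. Unset Printing Implicit Defensive.
Local Open Scope nat_scope.

Definition bindT (e : Tv) (g : nat -> Tv) : Tv :=
  match e with
  | ExS => ExS
  | FaS => FaS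
  | Ix j => g j
  | Wt r j =>
      match g j with
      | ExS => ExS
      | FaS => FaS
      | Ix k => Wt r k
      | Wt r' k => Wt (r + r')%R k
      end
  end.

Lemma compS_bind f g i : compS f g i = bindT (f i) g.
Proof. by []. Qed.

Definition idx (e : Tv) : nat := match e with Ix k => k | Wt _ k => k | _ => 0 end.
Definition exc (e : Tv) : bool := match e with ExS => true | FaS => true | _ => false end.
Definition isWt (e : Tv) : bool := match e with Wt _ _ => true | _ => false end.

Lemma bind_assoc e g h : bindT (bindT e g) h = bindT e (fun j => bindT (g j) h).
Proof.
case: e => [j|r j||] //=; case: (g j) => [k|r' k||] //=; case: (h k) => [k'|r'' k'||] //=.
by rewrite Rplus_assoc.
Qed.

Lemma bind_ret e : bindT e Ix = e.
Proof. by case: e. Qed.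

Lemma bind_ext e g g' : (~~ exc e -> g (idx e) = g' (idx e)) -> bindT e g = bindT e g'.
Proof. by case: e => [j|r j||] //= ->. Qed.

Lemma bind_same e g : (~~ exc e -> g (idx e) = Ix (idx e)) -> bindT e g = e.
Proof. move=> H; rewrite (bind_ext (g' := Ix)) ?bind_ret //. Qed.

Lemma exc_bind e g : exc (bindT e g) = exc e || exc (g (idx e)).
Proof. by case: e => [j|r j||] //=; case: (g j). Qed.

Lemma idx_bind e g : ~~ exc e -> idx (bindT e g) = idx (g (idx e)).
Proof. by case: e => [j|r j||] //=; case: (g j). Qed.

Lemma weight_bind e g : ~~ exc (bindT e g) ->
  weight (bindT e g) = (weight e + weight (g (idx e)))%R.
Proof.
case: e => [j|r j||] //=; case: (g j) => [k|r' k||] //= _; lra.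
Qed.

Lemma isWt_bind e g : ~~ exc (bindT e g) -> isWt (bindT e g) = isWt e || isWt (g (idx e)).
Proof. by case: e => [j|r j||] //=; case: (g j). Qed.

Lemma bind_exc e g : exc e -> bindT e g = e.
Proof. by case: e. Qed.

Lemma bind_Ix j g : bindT (Ix j) g = g j.
Proof. by []. Qed.

Definition stepf (l : nat) (f : nat -> Tv) (p : nat) : Tv :=
  if in_range l p then f p else Ix p.

Fixpoint A (l : nat) (f : nat -> Tv) (p : nat) (J : nat) : Tv :=
  match J with 0 => f p | S J' => bindT (A l f p J') (stepf l f) end.

Definition exited (l : nat) (e : Tv) : bool :=
  match e with Ix k => ~~ in_range l k | Wt _ k => ~~ in_range l k | _ => true end.

Definition unshift (l : nat) (e : Tv) : Tv :=
  match e with Ix k => Ix (k - l) | Wt r k => Wt r (k - l) | e => e end.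

Definition boundedP (u : nat -> R) : Prop := exists M, forall J, (M <= u J)%R.

Definition bval (u : nat -> R) : Tv :=
  match excluded_middle_informative (boundedP u) with left _ => ExS | right _ => FaS end.

Lemma A_stable1 l f p J : exited l (A l f p J) -> A l f p J.+1 = A l f p J.
Proof.
rewrite /=; move=> H; apply: bind_same => Hn.
move: H Hn; case: (A l f p J) => [k|r k||] //= H _; by rewrite /stepf (negbTE H).
Qed.

Lemma exited_stable1 l f p J : exited l (A l f p J) -> exited l (A l f p J.+1).
Proof. by move=> H; rewrite A_stable1. Qed.

Lemma A_stable l f p J d : exited l (A l f p J) -> A l f p (J + d) = A l f p J.
Proof.
move=> H; elim: d => [|d IH]; first by rewrite addn0.
by rewrite addnS A_stable1 IH.
Qed.

Lemma exited_mono l f p J J' : J <= J' -> exited l (A l f p J) -> exited l (A l f p J').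
Proof. move=> /subnKC <- H; by rewrite A_stable. Qed.

Lemma A_stable_le l f p J J' : J <= J' -> exited l (A l f p J) -> A l f p J' = A l f p J.
Proof. move=> /subnKC <- H; by rewrite A_stable. Qed.

Definition Pw l f i := psum (fun j => weight (tr_walk l f i j)).

Definition summ l f i (K : nat) : Tv :=
  match tr_walk l f i K with
  | ExS => ExS | FaS => FaS
  | Ix k => if has_wl_before l f i K then Wt (Pw l f i K) k else Ix k
  | Wt _ k => Wt (Pw l f i K) k
  end.

Lemma tr_cont_S l j v : tr_cont l j.+1 v = ~~ exited l v.
Proof. by rewrite /tr_cont; case: v => [k|r k||] //=; rewrite negbK. Qed.

Lemma walk_S l f i J : tr_walk l f i J.+1 =
  (if tr_cont l J (tr_walk l f i J) then
     match tr_walk l f i J with Ix k => f k | Wt _ k => f k | _ => tr_walk l f i J end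
   else tr_walk l f i J).
Proof. by []. Qed.

Lemma hwb_S l f i K : has_wl_before l f i K.+1 = has_wl_before l f i K || (0 < K) && tr_wl l f i K.
Proof. by []. Qed.

Lemma psum_S a K : psum a K.+1 = (psum a K + a K.+1)%R.
Proof. by []. Qed.

Arguments tr_walk : simpl never.
Arguments psum : simpl never.
Arguments has_wl_before : simpl never.

Lemma walk_0 l f i : tr_walk l f i 0 = Ix (l + i).
Proof. by []. Qed.
Lemma walk_1 l f i : tr_walk l f i 1 = f (l + i).
Proof. by []. Qed.
Lemma hwb_1 l f i : has_wl_before l f i 1 = false.
Proof. by []. Qed.
Lemma psum_0 a : psum a 0 = 0%R.
Proof. by []. Qed.

Lemma walk_A l f i J : (forall s, s < J -> ~~ exited l (A l f (l + i) s)) ->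
  A l f (l + i) J = summ l f i J.+1 /\ (forall k, summ l f i J.+1 = Ix k -> Pw l f i J.+1 = 0%R).
Proof.
rewrite /summ /Pw.
elim: J => [|J IH] Hs.
  rewrite walk_1 hwb_1 psum_S psum_0 walk_1 /=.
  case: (f (l + i)) => [k|r k||] //=; split => //; try (by move=> k' [] _; lra).
  by rewrite Rplus_0_l.
have [IH1 IH2] := IH (fun s hs => Hs s (ltnW hs)).
have HJ := Hs J (ltnSn J).
have -> : A l f (l+i) J.+1 = bindT (A l f (l+i) J) (stepf l f) by [].
rewrite IH1 in HJ *.
rewrite (psum_S _ J.+1) (hwb_S _ _ _ J.+1) (walk_S _ _ _ J.+1) tr_cont_S /tr_wl.
move: IH2 HJ.
case: (tr_walk l f i J.+1) => [k|r k||] H2 Hk; try by move: Hk.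
- case Hb: (has_wl_before l f i J.+1) in H2 Hk *; rewrite /= in Hk;
    rewrite /= /stepf (negbNE Hk) /= ?orbF.
  + case: (f k) => [k'|r' k'||] //=; split => //; by rewrite ?Rplus_0_r.
  + have -> := H2 k erefl.
    case: (f k) => [k'|r' k'||] //=; split => //; try (by move=> ? []; lra).
    by rewrite Rplus_0_l.
- rewrite /= in Hk; rewrite /= /stepf (negbNE Hk) /= orbT.
  case: (f k) => [k'|r' k'||] //=; split => //; by rewrite ?Rplus_0_r.
Qed.

Lemma exited_summ l f i K : exited l (summ l f i K) = exited l (tr_walk l f i K).
Proof. rewrite /summ; case: (tr_walk l f i K) => [k|r k||] //; by case: has_wl_before. Qed.

Lemma exc_summ l f i K : exc (summ l f i K) = exc (tr_walk l f i K).
Proof. rewrite /summ; case: (tr_walk l f i K) => [k|r k||] //; by case: has_wl_before. Qed.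

Lemma idx_summ l f i K : idx (summ l f i K) = idx (tr_walk l f i K).
Proof. rewrite /summ; case: (tr_walk l f i K) => [k|r k||] //; by case: has_wl_before. Qed.

Lemma fin_summ l f i K : tr_fin_value l f i K = unshift l (summ l f i K).
Proof. rewrite /tr_fin_value /summ; case: (tr_walk l f i K) => [k|r k||] //; by case: has_wl_before. Qed.

Lemma first_exit l f p J : exited l (A l f p J) ->
  exists J0, [/\ J0 <= J, exited l (A l f p J0) & forall s, s < J0 -> ~~ exited l (A l f p s)].
Proof.
move=> HJ.
have H : exists J, exited l (A l f p J) by exists J.
case: (ex_minnP H) => m Hm Hmin; exists m; split => //; first exact: Hmin.
move=> s hs; apply/negP => Hx; have := Hmin s Hx; rewrite leqNgt hs. done.
Qed.

Lemma stop_iff l f i K J0 : (forall s, s < J0 -> ~~ exited l (A l f (l + i) s)) ->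
  K <= J0.+1 -> tr_stop l f i K = (if K is S s then exited l (A l f (l+i) s) else false).
Proof.
move=> Hs; case: K => [|s] hK; first by [].
rewrite /tr_stop tr_cont_S negbK.
have [H1 _] := walk_A (J:=s) (fun s' hs' => Hs s' (leq_trans hs' hK)).
by rewrite H1 exited_summ.
Qed.

Lemma CT_fin l f i J : exited l (A l f (l+i) J) -> trace_at l f i = unshift l (A l f (l+i) J).
Proof.
move=> HJ; have [J0 [hJ0 HJ0 Hs]] := first_exit HJ.
rewrite (A_stable_le hJ0 HJ0).
have Hstop : tr_stop l f i J0.+1 by rewrite (stop_iff (K:=J0.+1) Hs).
rewrite /trace_at; case: excluded_middle_informative => [H|H]; last first.
  by exfalso; apply: H; exists J0.+1.
case: (ex_minnP H) => m Hm Hmin.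
have Hm' : m = J0.+1.
  apply/eqP; rewrite eqn_leq Hmin //=; rewrite leqNgt; apply/negP => hm.
  move: Hm; rewrite (stop_iff (K:=m) Hs); last exact: ltnW.
  case: m hm Hmin => [|s] //= hs _; by rewrite (negbTE (Hs s hs)).
rewrite Hm' fin_summ.
by have [-> _] := walk_A Hs.
Qed.

Lemma pigeon (h : nat -> nat) L s : (forall j, j <= L -> in_range L (h (s + j))) ->
  exists a b, [/\ a < b, b <= L & h (s + a) = h (s + b)].
Proof.
move=> H.
set sq := [seq h (s + j) | j <- iota 0 L.+1].
have Hsz : size sq = L.+1 by rewrite size_map size_iota.
have : ~~ uniq sq.
  apply/negP => Hu.
  have : size sq <= size (iota 1 L).
    apply: uniq_leq_size => // y /mapP [j hj ->].
    rewrite mem_iota in hj; have := H j; rewrite /in_range mem_iota.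
    move=> H'; have := H' ltac:(lia); lia.
  by rewrite Hsz size_iota ltnn.
move/(uniqPn 0) => [a [b [hab hb]]].
rewrite Hsz in hb.
rewrite /sq (nth_map 0) ?size_iota; last lia. rewrite (nth_map 0) ?size_iota; last lia.
rewrite !nth_iota; [|lia|lia] => E.
exists a, b; split => //.
Qed.

Lemma INR_add m n : INR (m + n) = (INR m + INR n)%R.
Proof. exact: plus_INR. Qed.
Lemma INR_mul m n : INR (m * n) = (INR m * INR n)%R.
Proof. exact: mult_INR. Qed.

Lemma fin_bounds (u : nat -> R) N : exists m Mx, forall J, J <= N -> (m <= u J <= Mx)%R.
Proof.
elim: N => [|N [m [Mx IH]]].
  exists (u 0), (u 0) => J; rewrite leqn0 => /eqP ->; lra.
exists (Rmin m (u N.+1)), (Rmax Mx (u N.+1)) => J hJ.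
case: (ltngtP J N.+1) => [h||->]; last 2 first.
- by move=> h; move: hJ; rewrite leqNgt h.
- split; [apply: Rmin_r|apply: Rmax_r].
have := IH J h; move: (Rmin_l m (u N.+1)) (Rmax_l Mx (u N.+1)); lra.
Qed.

Lemma dichot (x : nat -> nat) (u : nat -> R) (L : nat) (nx : nat -> nat) (d : nat -> R) :
  (forall J, in_range L (x J)) -> (forall J, x J.+1 = nx (x J)) ->
  (forall J, u J.+1 = u J + d (x J))%R ->
  boundedP u \/ exists A0 c, (c < 0)%R /\ forall J, (u J <= A0 + c * INR J)%R.
Proof.
move=> Hx Hnx Hu.
have [a [b [hab hb Exab]]] := @pigeon x L 0 (fun j _ => Hx _).
rewrite !add0n in Exab.
set p := b - a.
have hp : 0 < p by rewrite /p; lia.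
have Hper : forall t, x (a + t) = x (b + t).
  elim=> [|t IH]; first by rewrite !addn0.
  by rewrite !addnS !Hnx IH.
set C := (u b - u a)%R.
have HC : forall t, u (b + t) = (u ((a + t)%nat) + C)%R.
  elim=> [|t IH]; first by rewrite !addn0 /C; lra.
  by rewrite !addnS !Hu IH Hper; lra.
have HK : forall k r, u (a + r + k * p) = (u ((a + r)%nat) + INR k * C)%R.
  elim=> [|k IH] r; first by rewrite mul0n addn0 /=; lra.
  have -> : a + r + k.+1 * p = b + (r + k * p) by rewrite /p mulSn; lia.
  rewrite HC addnA IH S_INR; lra.
have [m [Mx Hb]] := fin_bounds u b.
have Hdec : forall J, J < a \/ exists k r, r < p /\ J = a + r + k * p.
  move=> J; case: (ltnP J a) => hJ; [by left|right].
  exists ((J - a) %/ p), ((J - a) %% p); split; first by rewrite ltn_pmod.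
  have := divn_eq (J - a) p; lia.
case: (Rle_dec 0 C) => hC.
  left; exists m => J; case: (Hdec J) => [hJ|[k [r [hr ->]]]].
    have := Hb J ltac:(lia); lra.
  rewrite HK; have := Hb (a + r) ltac:(lia); have := pos_INR k; nra.
right; set c := (C / INR p)%R.
have hpR : (0 < INR p)%R by apply: lt_0_INR; apply/ltP.
have hc : (c < 0)%R by rewrite /c; apply: Rdiv_neg_pos => //; lra.
have hcp : (c * INR p = C)%R by rewrite /c; field; lra.
exists (Mx - c * INR b)%R, c; split => // J.
case: (Hdec J) => [hJ|[k [r [hr ->]]]].
  have := Hb J ltac:(lia).
  have hJb : (INR J <= INR b)%R by apply: le_INR; apply/leP; lia.
  nra.
rewrite HK; have := Hb (a + r) ltac:(lia).
have -> : INR b = (INR a + INR p)%R by rewrite -INR_add /p; congr INR; lia.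
rewrite !INR_add INR_mul.
have hrp : (INR r < INR p)%R by apply: lt_INR; apply/ltP.
rewrite -hcp. nra.
Qed.

Lemma real_uniq M f x y k : realizable M f -> in_range M x -> in_range M y ->
  f x = Ix k -> ~~ exc (f y) -> idx (f y) = k -> x = y.
Proof.
move=> Hr hx hy fx hey iy; case: (eqVneq x y) => // /eqP hxy.
have [h1 h2] := Hr x y hx hy hxy k fx.
move: hey iy h1 h2; case: (f y) => [k'|r k'||] //= _ <-; first by [].
by move=> _ /(_ r).
Qed.

Lemma Ix_of e : ~~ exc e -> ~~ isWt e -> e = Ix (idx e).
Proof. by case: e. Qed.

Lemma in_range_le L M y : L <= M -> in_range L y -> in_range M y.
Proof. rewrite /in_range => h /andP [h1 h2]; rewrite h1; exact: leq_trans h2 h. Qed.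

Lemma noIx M l f (x : nat -> nat) : realizable M f -> l <= M ->
  in_range M (x 0) -> ~~ in_range l (x 0) -> (forall J, in_range l (x J.+1)) ->
  (forall J, ~~ exc (f (x J)) /\ idx (f (x J)) = x J.+1) ->
  forall N, exists J, N <= J /\ isWt (f (x J)).
Proof.
move=> Hr hlM h0 h0' hx he.
have hM : forall J, in_range M (x J) by case=> // J; apply: in_range_le (hx J).
have fIx : forall J, ~~ isWt (f (x J)) -> f (x J) = Ix (x J.+1).
  move=> J hw; have [h1 h2] := he J; by rewrite (Ix_of h1 hw) h2.
have core : forall N0, (forall J, N0 <= J -> ~~ isWt (f (x J))) ->
    (N0 = 0 \/ exists N, N0 = N.+1 /\ isWt (f (x N))) -> False.
  move=> N0 Hall Hst.
  have [a [b [hab hb Eab]]] := @pigeon x l N0.+1 (fun j _ => hx (N0 + j)).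
  elim: a b hab Eab {hb} => [|a IH] b hab Eab.
  - rewrite addn0 in Eab.
    have e1 : f (x (N0 + b)) = Ix (x N0.+1).
      rewrite fIx; last (apply: Hall; lia). by rewrite Eab addSn.
    have E := real_uniq Hr (hM _) (hM _) e1 (he N0).1 (he N0).2.
    case: Hst => [E0|[N [EN hw]]].
    + subst N0; move: (hx (b.-1)); rewrite add0n in E.
      have -> : b.-1.+1 = b by lia.
      by rewrite E (negbTE h0').
    + subst N0.
      have e2 : f (x (N + b)) = Ix (x N.+1).
        rewrite fIx; last by apply: Hall; lia.
        by rewrite -addSn E.
      have E2 := real_uniq Hr (hM _) (hM _) e2 (he N).1 (he N).2.
      move: hw; by rewrite -E2 e2.
  - have e1 : f (x (N0 + a.+1)) = Ix (x (N0.+1 + a.+1)).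
      rewrite fIx; last (apply: Hall; lia). by rewrite addSn.
    have e2 : f (x (N0 + b)) = Ix (x (N0.+1 + b)).
      rewrite fIx; last (apply: Hall; lia). by rewrite addSn.
    have E' := real_uniq Hr (hM _) (hM _) e1 (he (N0 + b)).1 (ltac:(by rewrite e2 Eab)).
    apply: (IH b.-1); first lia.
    have -> : N0.+1 + b.-1 = N0 + b by lia.
    by rewrite addSnnS.
move=> N; apply: NNPP => Hn.
have Hall : forall J, N <= J -> ~~ isWt (f (x J)).
  move=> J hJ; apply/negP => hw; apply: Hn; by exists J.
elim: N Hall {Hn} => [|N IH] Hall; first by apply: (core 0) => //; left.
case hw: (isWt (f (x N))).
  by apply: (core N.+1) => //; right; exists N.
apply: IH => J; rewrite leq_eqVlt => /orP [/eqP <-|hJ]; first by rewrite hw.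
exact: Hall.
Qed.

From Coquelicot Require Import Hierarchy.
Local Open Scope nat_scope.

Lemma lim_over (K c : R) : is_lim_seq (fun N => c + K / INR N.+1)%R c.
Proof.
have h1 : is_lim_seq (fun N => INR N.+1) p_infty := proj1 (is_lim_seq_incr_1 _ _) is_lim_seq_INR.
have h2 := is_lim_seq_inv _ _ h1 ltac:(discriminate).
have h3 := is_lim_seq_scal_l _ K _ h2.
rewrite /= Rmult_0_r in h3.
have := is_lim_seq_plus' _ _ c 0%R (is_lim_seq_const c) h3.
rewrite Rplus_0_r; apply: is_lim_seq_ext => n; by rewrite /Rdiv.
Qed.

Lemma liminf_over (K c : R) : LimInf_seq (fun N => c + K / INR N.+1)%R = c.
Proof. apply: is_LimInf_seq_unique; apply: is_lim_LimInf_seq; exact: lim_over. Qed.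

Lemma liminf_pos (w : nat -> R) M : (forall N, M / INR N.+1 <= w N)%R -> Rbar_le 0%R (LimInf_seq w).
Proof.
move=> H; have H' : forall N, (0 + M / INR N.+1 <= w N)%R by move=> N; rewrite Rplus_0_l; exact: H.
have := @LimInf_le (fun N => 0 + M / INR N.+1)%R w (ex_intro _ 0 (fun n _ => H' n)).
by rewrite liminf_over.
Qed.

Lemma liminf_neg (w : nat -> R) A0 c : (c < 0)%R -> (forall N, w N <= c + A0 / INR N.+1)%R ->
  ~ Rbar_le 0%R (LimInf_seq w).
Proof.
move=> hc H; have := @LimInf_le w (fun N => c + A0 / INR N.+1)%R (ex_intro _ 0 (fun n _ => H n)).
rewrite liminf_over => h1 h2.
have := Rbar_le_trans _ _ _ h2 h1; rewrite /=; lra.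
Qed.

Lemma nexited l v : ~~ exited l v = ~~ exc v && in_range l (idx v).
Proof. by case: v => [k|r k||] //=; rewrite negbK. Qed.

Lemma next_wl_spec l f i a : (exists j, a <= j /\ tr_wl l f i j) ->
  [/\ a <= next_wl l f i a, tr_wl l f i (next_wl l f i a) &
      forall j, a <= j -> j < next_wl l f i a -> ~~ tr_wl l f i j].
Proof.
move=> [j0 [h1 h2]]; rewrite /next_wl; case: excluded_middle_informative => [H|H]; last first.
  by exfalso; apply: H; exists j0; rewrite h1 h2.
case: (ex_minnP H) => n /andP [hn1 hn2] Hmin; split => // j hj hjn.
apply/negP => hw; have := Hmin j; rewrite hj hw => /(_ isT); rewrite leqNgt hjn. done.
Qed.

Lemma psum_gap (w : nat -> R) a b : a < b -> (forall j, a < j -> j < b -> w j = 0%R) ->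
  psum w b = (psum w a + w b)%R.
Proof.
elim: b => [|b IH] //= hab Hz.
rewrite psum_S; case: (ltngtP a b) => h.
- rewrite IH //; last by move=> j h1 h2; apply: Hz => //; exact: ltnW.
  rewrite (Hz b) //; lra.
- by move: hab; rewrite ltnS leqNgt h.
- by subst.
Qed.

Lemma weight_summ l f i K : ~~ exc (summ l f i K) ->
  (forall k, summ l f i K = Ix k -> Pw l f i K = 0%R) -> weight (summ l f i K) = Pw l f i K.
Proof.
rewrite /summ; case: (tr_walk l f i K) => [k|r k||] //; case: has_wl_before => //= _ H.
by rewrite (H k).
Qed.

Lemma inf_facts l f i (Hinf : forall J, ~~ exited l (A l f (l+i) J)) J :
  [/\ A l f (l+i) J = summ l f i J.+1, weight (A l f (l+i) J) = Pw l f i J.+1,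
      ~~ exc (tr_walk l f i J.+1), in_range l (idx (tr_walk l f i J.+1)) &
      tr_walk l f i J.+2 = f (idx (tr_walk l f i J.+1))].
Proof.
have [H1 H2] := walk_A (J:=J) (fun s _ => Hinf s).
have HJ := Hinf J; rewrite H1 nexited exc_summ idx_summ in HJ; case/andP: HJ => he hr.
split => //; first by rewrite H1 weight_summ // exc_summ.
rewrite (walk_S l f i J.+1) tr_cont_S nexited he hr /=.
by case: (tr_walk l f i J.+1) he.
Qed.

Lemma in_range_shift l m i : in_range m i -> in_range (l + m) (l + i) && ~~ in_range l (l + i).
Proof. rewrite /in_range => /andP [h1 h2]; apply/andP; split; [apply/andP; split|]; lia. Qed.

Lemma CT_inf l m f i : realizable (l+m) f -> in_range m i ->
  (forall J, ~~ exited l (A l f (l+i) J)) ->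
  trace_at l f i = bval (fun J => weight (A l f (l+i) J)).
Proof.
move=> Hr hi Hinf.
have Hns : forall K, ~~ tr_stop l f i K.
  move=> K; rewrite (stop_iff (J0:=K) (fun s _ => Hinf s)) //; case: K => // s; exact: Hinf.
rewrite /trace_at; case: excluded_middle_informative => [[K HK]|_].
  by move: (Hns K); rewrite HK.
have F := inf_facts Hinf.
set x := fun J => idx (tr_walk l f i J).
have fx : forall J, f (x J) = tr_walk l f i J.+1.
  case=> [|J]; first by rewrite /x walk_0 walk_1.
  by have [_ _ _ _ ->] := F J.
have /andP [h0 h0'] := in_range_shift l hi.
have hx : forall J, in_range l (x J.+1) by move=> J; have [_ _ _ h _] := F J.
have he : forall J, ~~ exc (f (x J)) /\ idx (f (x J)) = x J.+1.
  move=> J; rewrite fx; have [_ _ h _ _] := F J; by split.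
have HnoIx := @noIx (l+m) l f x Hr (leq_addr m l) h0 h0' hx he.
have Hwl : forall a, exists j, a <= j /\ tr_wl l f i j.
  move=> a; have [J [hJ hw]] := HnoIx a; exists J.+1; split; first exact: leqW.
  have [_ _ _ hr _] := F J; move: hw hr; rewrite /tr_wl fx.
  by case: (tr_walk l f i J.+1).
have Hz : forall j, ~~ tr_wl l f i j -> weight (tr_walk l f i j) = 0%R.
  case=> [|J]; first by rewrite walk_0.
  have [_ _ _ hr _] := F J; move: hr; rewrite /tr_wl.
  by case: (tr_walk l f i J.+1) => //= r k ->.
have Hpos : forall t, t < wl_pos l f i t /\ wsum l f i t.+1 = Pw l f i (wl_pos l f i t).
  elim=> [|t [IH1 IH2]].
  - have [h1 h2 h3] := next_wl_spec (Hwl 1).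
    have -> : wl_pos l f i 0 = next_wl l f i 1 by [].
    split; first exact: h1.
    have -> : wsum l f i 1 = (0 + wprime l f i 0)%R by [].
    rewrite /Pw (psum_gap (a:=0)) //.
    move=> j hj1 hj2; apply: Hz; exact: h3.
  - have [h1 h2 h3] := next_wl_spec (Hwl (wl_pos l f i t).+1).
    have -> : wl_pos l f i t.+1 = next_wl l f i (wl_pos l f i t).+1 by [].
    split; first exact: leq_ltn_trans IH1 h1.
    have -> : wsum l f i t.+2 = (wsum l f i t.+1 + wprime l f i t.+1)%R by [].
    rewrite IH2 /Pw (psum_gap (a:=wl_pos l f i t) (b:=next_wl l f i (wl_pos l f i t).+1)) //.
    move=> j hj1 hj2; apply: Hz; exact: h3.
have Hw : forall N, wavg l f i N = (weight (A l f (l+i) (wl_pos l f i N).-1) / INR N.+1)%R.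
  move=> N; rewrite /wavg (Hpos N).2.
  have [_ -> _ _ _] := F (wl_pos l f i N).-1.
  have [h _] := Hpos N; by rewrite prednK //; exact: leq_ltn_trans (leq0n N) h.
have hD : forall N, (0 < INR N.+1)%R by move=> N; apply: lt_0_INR; apply/ltP.
rewrite /tr_inf_value /bval.
case: (excluded_middle_informative (boundedP _)) => [[M HM]|Hnb].
  case: excluded_middle_informative => // H; exfalso; apply: H.
  apply: (liminf_pos (M:=M)) => N; rewrite Hw.
  apply: Rmult_le_compat_r; [left; apply: Rinv_0_lt_compat; exact: hD| exact: HM].
case: excluded_middle_informative => // H; exfalso.
have Hex : forall J, ~~ exc (A l f (l+i) J) && in_range l (idx (A l f (l+i) J)).
  move=> J; by rewrite -nexited.
have d1 : forall J, in_range l (idx (A l f (l+i) J)).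
  by move=> J; have /andP [_ ->] := Hex J.
have d2 : forall J, idx (A l f (l+i) J.+1) = idx (f (idx (A l f (l+i) J))).
  move=> J; have /andP [hE hr] := Hex J.
  by rewrite [A _ _ _ J.+1]/= idx_bind // /stepf hr.
have d3 : forall J, weight (A l f (l+i) J.+1) = (weight (A l f (l+i) J) + weight (f (idx (A l f (l+i) J))))%R.
  move=> J; have /andP [hE hr] := Hex J; have /andP [hE' _] := Hex J.+1.
  by rewrite [A _ _ _ J.+1]/= weight_bind // /stepf hr.
have [Hb|[A0 [c [hc Hl]]]] := @dichot (fun J => idx (A l f (l+i) J)) (fun J => weight (A l f (l+i) J)) l
   (fun y => idx (f y)) (fun y => weight (f y)) d1 d2 d3.
- exact: Hnb Hb.
- move: H; apply: (liminf_neg (A0 := (A0 - c)%R) hc) => N; rewrite Hw.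
  have [hN _] := Hpos N.
  have hle : (INR N <= INR (wl_pos l f i N).-1)%R by apply: le_INR; apply/leP; lia.
  have := Hl (wl_pos l f i N).-1.
  have hDN := hD N; rewrite S_INR in hDN *.
  move=> hu.
  have -> : (c + (A0 - c) / (INR N + 1) = (A0 + c * INR N) / (INR N + 1))%R by field; lra.
  apply: Rmult_le_compat_r; first by left; apply: Rinv_0_lt_compat.
  nra.
Qed.

Lemma wf_bind K N e g : wf_T K e -> (forall j, in_range K j -> wf_T N (g j)) ->
  wf_T N (bindT e g).
Proof.
case: e => [j|r j||] //= hj H1; have := H1 j hj; case: (g j) => [k|r' k||] //=.
Qed.

Lemma A_wf l L N f p : l <= L -> (forall q, in_range L q -> wf_T N (f q)) ->
  in_range L p -> forall J, wf_T N (A l f p J).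
Proof.
move=> hlL Hf hp; elim=> [|J IH] /=; first exact: Hf.
apply: (wf_bind (K:=N)) => // j hj; rewrite /stepf; case: ifP => h //.
apply: Hf; exact: in_range_le h.
Qed.

Lemma unshift_wf l n e : wf_T (l + n) e -> exited l e -> wf_T n (unshift l e).
Proof. case: e => [k|r k||] //=; rewrite /in_range => /andP [h1 h2]; rewrite negb_and -leqNgt; case/orP; lia. Qed.

Lemma trace_cases l m f i : realizable (l+m) f -> in_range m i ->
  (exists J, exited l (A l f (l+i) J) /\ trace_at l f i = unshift l (A l f (l+i) J)) \/
  ((forall J, ~~ exited l (A l f (l+i) J)) /\ trace_at l f i = bval (fun J => weight (A l f (l+i) J))).
Proof.
move=> Hr hi; case: (classic (exists J, exited l (A l f (l+i) J))) => [[J HJ]|H].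
  left; exists J; split => //; exact: CT_fin.
have H' : forall J, ~~ exited l (A l f (l+i) J).
  move=> J; apply/negP => h; apply: H; by exists J.
right; split => //; exact: (CT_inf Hr hi H').
Qed.

Lemma bval_exc u : exc (bval u).
Proof. by rewrite /bval; case: excluded_middle_informative. Qed.

Lemma tr_wf l m n f i : is_arrow (l+m) (l+n) f -> in_range m i -> wf_T n (trace_at l f i).
Proof.
move=> [Hf Hr] hi; case: (trace_cases Hr hi) => [[J [HJ ->]]|[_ ->]].
  apply: unshift_wf => //; apply: (A_wf (L:=l+m)) => //; first exact: leq_addr.
  + by have /andP [] := in_range_shift l hi.
by rewrite /bval; case: excluded_middle_informative.
Qed.

Definition posA l f p s := if s is S s' then idx (A l f p s') else p.

Lemma A_step l f p J : ~~ exited l (A l f p J) -> A l f p J.+1 = bindT (A l f p J) f.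
Proof.
rewrite nexited => /andP [he hr]; rewrite [A _ _ _ J.+1]/=; apply: bind_ext => _.
by rewrite /stepf hr.
Qed.

Lemma exc_persist l f p s J : s <= J -> exc (A l f p s) -> exc (A l f p J).
Proof.
move=> /subnKC <-; move: (J - s) => d; elim: d => [|d IH] h; first by rewrite addn0.
by rewrite addnS [A _ _ _ _.+1]/= exc_bind (IH h).
Qed.

Definition notIx e := exc e || isWt e.

Lemma notIx_bind e g : notIx e -> notIx (bindT e g).
Proof. rewrite /notIx; case: e => [j|r j||] //= _; by case: (g j). Qed.

Lemma notIx_persist l f p s J : s <= J -> notIx (A l f p s) -> notIx (A l f p J).
Proof.
move=> /subnKC <-; move: (J - s) => d; elim: d => [|d IH] h; first by rewrite addn0.
by rewrite addnS [A _ _ _ _.+1]/=; apply: notIx_bind; apply: IH.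
Qed.

Lemma entries l f p J : (forall s, s < J -> ~~ exited l (A l f p s)) -> ~~ exc (A l f p J) ->
  forall s, s <= J -> ~~ exc (f (posA l f p s)) /\ idx (f (posA l f p s)) = posA l f p s.+1.
Proof.
move=> Hs HJ s hs.
have he : ~~ exc (A l f p s) by apply/negP => h; move: HJ; rewrite (exc_persist hs h).
suff : ~~ exc (f (posA l f p s)) /\ idx (A l f p s) = idx (f (posA l f p s)) by case=> h1 e; split => //=; rewrite e.
case: s hs he => [|s] hs he; first by [].
rewrite A_step ?Hs // in he *; rewrite exc_bind negb_or in he; case/andP: he => he1 he2.
by rewrite idx_bind.
Qed.

Lemma entries_Ix l f p J k : (forall s, s < J -> ~~ exited l (A l f p s)) -> A l f p J = Ix k ->
  forall s, s <= J -> f (posA l f p s) = Ix (posA l f p s.+1).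
Proof.
move=> Hs HJ s hs.
have hI : forall s, s <= J -> A l f p s = Ix (idx (A l f p s)).
  move=> s' hs'; have : ~~ notIx (A l f p s').
    apply/negP => h; have := notIx_persist hs' h; by rewrite HJ.
  by rewrite /notIx; case: (A l f p s').
suff -> : f (posA l f p s) = A l f p s by rewrite -hI.
case: s hs => [|s] hs; first by [].
by rewrite A_step ?Hs // (hI s (ltnW hs)).
Qed.

Lemma pos_in l f p s J : (forall s', s' < J -> ~~ exited l (A l f p s')) -> 0 < s -> s <= J ->
  in_range l (posA l f p s).
Proof.
move=> Hs; case: s => // s _ hs; have := Hs s hs; rewrite nexited => /andP [_ h]; exact: h.
Qed.

Lemma backtrack M l f (x y : nat -> nat) K0 K1 : realizable M f -> l <= M ->
  in_range M (x 0) -> ~~ in_range l (x 0) -> in_range M (y 0) -> ~~ in_range l (y 0) ->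
  (forall s, 0 < s -> s <= K0 -> in_range l (x s)) ->
  (forall s, 0 < s -> s <= K1 -> in_range l (y s)) ->
  (forall s, s <= K0 -> f (x s) = Ix (x s.+1)) ->
  (forall s, s <= K1 -> ~~ exc (f (y s)) /\ idx (f (y s)) = y s.+1) ->
  x K0.+1 = y K1.+1 -> x 0 = y 0.
Proof.
move=> Hr hlM hx0 hx0' hy0 hy0' hx hy fx fy Exy.
have hxM : forall s, s <= K0 -> in_range M (x s).
  by case=> // s hs; apply: (in_range_le hlM); apply: hx.
have hyM : forall s, s <= K1 -> in_range M (y s).
  by case=> // s hs; apply: (in_range_le hlM); apply: hy.
have C : forall t, t <= K0 -> t <= K1 -> x (K0 - t) = y (K1 - t).
  elim=> [|t IH] h0 h1.
  - rewrite !subn0; apply: (real_uniq Hr (hxM _ (leqnn _)) (hyM _ (leqnn _)) (fx _ (leqnn _))).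
    + exact: (fy _ (leqnn _)).1.
    + by rewrite (fy _ (leqnn _)).2.
  - have e := IH (ltnW h0) (ltnW h1).
    apply: (real_uniq Hr (hxM _ (leq_subr _ _)) (hyM _ (leq_subr _ _)) (fx _ (leq_subr _ _))).
    + exact: (fy _ (leq_subr _ _)).1.
    + rewrite (fy _ (leq_subr _ _)).2.
      have -> : (K1 - t.+1).+1 = K1 - t by lia.
      have -> : (K0 - t.+1).+1 = K0 - t by lia.
      by rewrite e.
case: (leqP K0 K1) => h.
- have := C K0 (leqnn _) h; rewrite subnn => e.
  case: (ltngtP K0 K1) => h'.
  + exfalso; move: hx0'; rewrite e hy //; lia.
  + by move: h; rewrite leqNgt h'.
  + by rewrite e h' subnn.
- have := C K1 (ltnW h) (leqnn _); rewrite subnn => e.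
  exfalso; move: hy0'; rewrite -e hx //; lia.
Qed.

Lemma first_val l m f i : realizable (l+m) f -> in_range m i -> ~~ exc (trace_at l f i) ->
  exists J, [/\ forall s, s < J -> ~~ exited l (A l f (l+i) s), exited l (A l f (l+i) J) &
                trace_at l f i = unshift l (A l f (l+i) J)].
Proof.
move=> Hr hi; case: (trace_cases Hr hi) => [[J [HJ _]]|[_ ->]]; last by rewrite bval_exc.
have [J0 [_ HJ0 Hs]] := first_exit HJ.
move=> _; exists J0; split => //; exact: CT_fin.
Qed.

Lemma tr_real l m n f : is_arrow (l+m) (l+n) f -> realizable m (fun i => trace_at l f i).
Proof.
move=> [Hf Hr] i j hi hj hij k Hk.
have Hwf : forall q J, in_range m q -> wf_T (l+n) (A l f (l+q) J).
  move=> q J hq; apply: (A_wf (L:=l+m)) => //; first exact: leq_addr.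
  by have /andP [] := in_range_shift l hq.
suff main : ~~ exc (trace_at l f j) -> idx (trace_at l f j) = k -> False.
  by split; [move=> E|move=> r E]; apply: main; rewrite E.
move=> hej hij'.
have [J0 [Hs0 HJ0 E0]] := first_val Hr hi (ltac:(by rewrite Hk)).
have [J1 [Hs1 HJ1 E1]] := first_val Hr hj hej.
have W0 := Hwf i J0 hi; have W1 := Hwf j J1 hj.
have [k' Ek'] : exists k', A l f (l+i) J0 = Ix k'.
  move: Hk; rewrite E0; case: (A l f (l+i) J0) => //= k' _; by exists k'.
have hk' : k' = l + k.
  move: Hk W0 HJ0; rewrite E0 Ek' /= => [[<-]]; rewrite /in_range; lia.
have he1 : ~~ exc (A l f (l+j) J1) by move: hej; rewrite E1; case: (A l f (l+j) J1).
have hk'' : idx (A l f (l+j) J1) = l + k.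
  move: hij' he1 W1 HJ1; rewrite E1; case: (A l f (l+j) J1) => [q|r q||] //= <- _;
   rewrite /in_range; lia.
have /andP [hi1 hi2] := in_range_shift l hi.
have /andP [hj1 hj2] := in_range_shift l hj.
have := @backtrack (l+m) l f (posA l f (l+i)) (posA l f (l+j)) J0 J1 Hr (leq_addr m l)
  hi1 hi2 hj1 hj2 (fun s h1 h2 => pos_in Hs0 h1 h2) (fun s h1 h2 => pos_in Hs1 h1 h2)
  (entries_Ix Hs0 Ek') (entries Hs1 he1) (ltac:(by rewrite /= Ek' hk'' hk')).
move=> /= /eqP; rewrite eqn_add2l => /eqP; exact: hij.
Qed.

Lemma tr_arrow_lem l m n f : is_arrow (l+m) (l+n) f -> is_arrow m n (fun i => trace_at l f i).
Proof. move=> H; split; [move=> i hi; exact: tr_wf H hi | exact: tr_real H]. Qed.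

Lemma realizable_of m f :
  (forall i j k, in_range m i -> in_range m j -> f i = Ix k -> ~~ exc (f j) -> idx (f j) = k -> i = j) ->
  realizable m f.
Proof.
move=> H i j hi hj hij k Hk; split.
- move=> E; apply: hij; apply: (H i j k) => //; by rewrite E.
- move=> r E; apply: hij; apply: (H i j k) => //; by rewrite E.
Qed.

Lemma bind_Ix_inv e g k : bindT e g = Ix k -> e = Ix (idx e) /\ g (idx e) = Ix k.
Proof. case: e => [j|r j||] //=; case: (g j) => //. Qed.

Lemma bind_nexc e g : ~~ exc (bindT e g) -> ~~ exc e /\ ~~ exc (g (idx e)).
Proof. rewrite exc_bind negb_or => /andP //. Qed.

Lemma wf_in N e : wf_T N e -> ~~ exc e -> in_range N (idx e).
Proof. by case: e. Qed.

Lemma id_arrow m : is_arrow m m (idS m).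
Proof.
split => // ; apply: realizable_of => i j k hi hj /= [<-] _ /=; by [].
Qed.

Lemma comp_arrow m l n f g : is_arrow m l f -> is_arrow l n g -> is_arrow m n (compS f g).
Proof.
move=> [Hf Rf] [Hg Rg]; split.
  move=> i hi; rewrite compS_bind; exact: wf_bind (Hf i hi) Hg.
apply: realizable_of => i j k hi hj; rewrite !compS_bind => Ei hne Ej.
have [e1 e2] := bind_Ix_inv Ei.
have [n1 n2] := bind_nexc hne.
case: (eqVneq (idx (f i)) (idx (f j))) => E.
- exact: (real_uniq Rf hi hj e1 n1 (esym E)).
- exfalso; move/eqP: E; apply.
  apply: (real_uniq Rg (wf_in (Hf i hi) (ltac:(by rewrite e1))) (wf_in (Hf j hj) n1) e2 n2).
  by rewrite -Ej idx_bind.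
Qed.

Lemma shiftT_exc n e : exc (shiftT n e) = exc e.
Proof. by case: e. Qed.
Lemma shiftT_idx n e : ~~ exc e -> idx (shiftT n e) = n + idx e.
Proof. by case: e. Qed.

Lemma tensor_arrow m n m' n' f g : is_arrow m n f -> is_arrow m' n' g ->
  is_arrow (m + m') (n + n') (tensorS m n f g).
Proof.
move=> [Hf Rf] [Hg Rg]; split.
  move=> i hi; rewrite /tensorS; case: ifP => h.
  - have := Hf i (ltac:(move: hi; rewrite /in_range; lia)).
    case: (f i) => //= k; rewrite /in_range; lia.
  - have := Hg (i - m) (ltac:(move: hi h; rewrite /in_range; lia)).
    case: (g (i - m)) => //= k; rewrite /in_range; lia.
apply: realizable_of => i j k hi hj; rewrite /tensorS.
case: ifP => hi'; case: ifP => hj'.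
- move=> Ei hne Ej; apply: (real_uniq Rf _ _ Ei hne Ej); move: hi hj hi' hj'; rewrite /in_range; lia.
- move=> Ei; have := Hf i (ltac:(move: hi hi'; rewrite /in_range; lia)); rewrite Ei /=.
  move=> hk; rewrite shiftT_exc => hne; rewrite shiftT_idx //.
  have := wf_in (Hg (j - m) (ltac:(move: hj hj'; rewrite /in_range; lia))) hne.
  move: hk; rewrite /in_range; lia.
- move=> Ei; have : ~~ exc (g (i - m)) by move: Ei; case: (g (i - m)).
  move=> hne0; have := wf_in (Hg (i - m) (ltac:(move: hi hi'; rewrite /in_range; lia))) hne0.
  move: Ei; case: (g (i - m)) => //= q [<-] hq hne Ej.
  have := wf_in (Hf j (ltac:(move: hj hj'; rewrite /in_range; lia))) hne.
  move: hq; rewrite Ej /in_range; lia.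
- move=> Ei; rewrite shiftT_exc => hne; rewrite shiftT_idx // => Ej.
  have [q Eq] : exists q, g (i - m) = Ix q by move: Ei; case: (g (i - m)) => //= q _; exists q.
  move: Ei; rewrite Eq /= => [[Ek]].
  have h1 : in_range m' (i - m) by move: hi hi'; rewrite /in_range; lia.
  have h2 : in_range m' (j - m) by move: hj hj'; rewrite /in_range; lia.
  have h3 : idx (g (j - m)) = q by move: Ej Ek; lia.
  have := real_uniq Rg h1 h2 Eq hne h3.
  move: hi hj hi' hj'; rewrite /in_range; lia.
Qed.

Lemma sigma_arrow m n : is_arrow (m + n) (n + m) (sigmaS m n).
Proof.
split.
  move=> i hi; rewrite /sigmaS; case: ifP => h /=; move: hi h; rewrite /in_range; lia.
apply: realizable_of => i j k hi hj; rewrite /sigmaS.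
case: ifP => h1; case: ifP => h2 /= [<-] _; move: hi hj h1 h2; rewrite /in_range; lia.
Qed.

Lemma unshift_bind l e g : exc e || (l <= idx e) ->
  unshift l (bindT e g) = bindT (unshift l e) (fun q => unshift l (g (l + q))).
Proof.
case: e => [j|r j||] //= h; rewrite subnKC //; by case: (g j).
Qed.

Lemma unshift_shift l e : unshift l (shiftT l e) = e.
Proof. case: e => [j|r j||] //=; by rewrite addKn. Qed.

Lemma unshift_exc l e : exc e -> unshift l e = e.
Proof. by case: e. Qed.

Lemma bind_const_exc e c : exc c -> ~~ exc e -> bindT e (fun _ => c) = c.
Proof. case: e => [j|r j||] //=; by case: c. Qed.

Lemma exited_bind l e g : ~~ exc e -> exited l (bindT e g) = exited l (g (idx e)).
Proof. case: e => [j|r j||] //= _; by case: (g j). Qed.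

Lemma exc_exited l e : exc e -> exited l e.
Proof. by case: e. Qed.

Lemma bval_ext u v : (boundedP u <-> boundedP v) -> bval u = bval v.
Proof.
move=> [h1 h2]; rewrite /bval.
case: excluded_middle_informative => H1; case: excluded_middle_informative => H2 //.
- by exfalso; apply: H2; apply: h1.
- by exfalso; apply: H1; apply: h2.
Qed.

Lemma bounded_err u v B : (forall J, Rabs (u J - v J) <= B)%R -> (boundedP u <-> boundedP v).
Proof.
move=> H; split => [[M HM]|[M HM]]; exists (M - B)%R => J; have := H J; have := HM J;
  have := Rle_abs (u J - v J); have := Rle_abs (- (u J - v J)); rewrite Rabs_Ropp; lra.
Qed.

Lemma bval_offset u v c : (forall J, u J = c + v J)%R -> bval u = bval v.
Proof.
move=> H; apply: bval_ext; apply: (bounded_err (B := Rabs c)) => J; rewrite H.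
have -> : (c + v J - v J = c)%R by lra. apply: Rle_refl.
Qed.

Lemma bounded_tail u N : boundedP u <-> boundedP (fun K => u (N + K)).
Proof.
split => [[M HM]|[M HM]]; first by exists M.
have [m [Mx Hb]] := fin_bounds u N.
exists (Rmin m M) => J; case: (leqP J N) => h.
- have := Hb J h; have := Rmin_l m M; lra.
- have := HM (J - N); rewrite subnKC; last exact: ltnW.
  have := Rmin_r m M; lra.
Qed.

Lemma realizable_ext M f f' : (forall x, in_range M x -> f x = f' x) -> realizable M f -> realizable M f'.
Proof.
move=> E Hr i j hi hj hij k; rewrite -!E // => Hk; exact: (Hr i j hi hj hij k Hk).
Qed.

Lemma arrow_ext m n f f' : (forall x, in_range m x -> f x = f' x) -> is_arrow m n f -> is_arrow m n f'.
Proof.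
move=> E [Hf Hr]; split; last exact: realizable_ext Hr.
move=> i hi; rewrite -E //; exact: Hf.
Qed.

Lemma shiftT_nexc_idx l e : ~~ exc e -> idx (shiftT l e) = l + idx e.
Proof. by case: e. Qed.

Lemma exited_nexc l e : ~~ exc e -> exited l e = ~~ in_range l (idx e).
Proof. by case: e. Qed.

Lemma tensor_id_low l g y : y <= l -> tensorS l l (idS l) g y = Ix y.
Proof. by rewrite /tensorS => ->. Qed.

Lemma tensor_id_high l g y : l < y -> tensorS l l (idS l) g y = shiftT l (g (y - l)).
Proof. by move=> h; rewrite /tensorS leqNgt h. Qed.

Lemma tr_natural_lem l m n m' n' f g h : is_arrow (l+m) (l+n) f -> is_arrow m' m g -> is_arrow n n' h ->
  forall i, in_range m' i ->
  trace_at l (compS (compS (tensorS l l (idS l) g) f) (tensorS l l (idS l) h)) i =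
  compS (compS g (fun a => trace_at l f a)) h i.
Proof.
move=> Af Ag Ah.
set G := tensorS l l (idS l) g; set H := tensorS l l (idS l) h.
set C := compS (compS G f) H.
have AC : is_arrow (l + m') (l + n') C.
  apply: comp_arrow (comp_arrow (tensor_arrow (id_arrow l) Ag) Af) (tensor_arrow (id_arrow l) Ah).
have [Hf Rf] := Af; have [Hg Rg] := Ag; have [Hh Rh] := Ah.
have key : forall y, in_range (l + n) y -> bindT (H y) (stepf l C) = bindT (stepf l f y) H.
  move=> y hy; case: (leqP y l) => hyl.
  - rewrite /H tensor_id_low // bind_Ix /stepf; case: ifP => hr.
    + by rewrite /C !compS_bind /G tensor_id_low.
    + by rewrite bind_Ix tensor_id_low.
  - rewrite /H tensor_id_high // /stepf.
    have -> : in_range l y = false by rewrite /in_range; lia.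
    rewrite bind_Ix tensor_id_high //; apply: bind_same => hne.
    have hq := wf_in (Hh (y - l) (ltac:(move: hy hyl; rewrite /in_range; lia))) (ltac:(by rewrite shiftT_exc in hne)).
    have -> : in_range l (idx (shiftT l (h (y - l)))) = false.
      rewrite shiftT_nexc_idx; last by rewrite shiftT_exc in hne.
      move: hq; rewrite /in_range; lia.
    by [].
move=> i hi.
have Hgi := Hg i hi.
have natA : forall J, A l C (l+i) J = bindT (shiftT l (g i)) (fun x => bindT (A l f x J) H).
  elim=> [|J IH].
  - rewrite /= /C !compS_bind /G tensor_id_high; last by move: hi; rewrite /in_range; lia.
    by rewrite addKn bind_assoc.
  - rewrite [A _ C _ J.+1]/= IH bind_assoc; apply: bind_ext => hsg.
    rewrite [A _ f _ J.+1]/= !bind_assoc; apply: bind_ext => hA.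
    apply: key; apply: wf_in hA; apply: (A_wf (L := l+m)) => //; first exact: leq_addr.
    rewrite shiftT_exc in hsg; rewrite shiftT_nexc_idx //.
    have := wf_in Hgi hsg; rewrite /in_range; lia.
rewrite !compS_bind.
case hg: (exc (g i)).
  have E0 : A l C (l+i) 0 = g i by rewrite natA bind_exc ?shiftT_exc //; case: (g i) hg.
  rewrite (CT_fin (J:=0)) E0 ?exc_exited // unshift_exc // !bind_exc //.
set a := idx (g i).
have ha : in_range m a by apply: wf_in; rewrite ?hg.
have hsg : ~~ exc (shiftT l (g i)) by rewrite shiftT_exc hg.
have hsi : idx (shiftT l (g i)) = l + a by rewrite shiftT_nexc_idx ?hg.
have natA' : forall J, A l C (l+i) J = bindT (shiftT l (g i)) (fun _ => bindT (A l f (l+a) J) H).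
  by move=> J; rewrite natA; apply: bind_ext => _; rewrite hsi.
have Wf : forall J, wf_T (l+n) (A l f (l+a) J).
  move=> J; apply: (A_wf (L := l+m)) => //; first exact: leq_addr.
  by have /andP [] := in_range_shift l ha.
rewrite bind_assoc.
case: (trace_cases Rf ha) => [[J [HJ Etr]]|[Hinf Etr]].
- set e := A l f (l+a) J.
  have HEe : forall q, q = a -> bindT (trace_at l f q) h = bindT (unshift l e) h by move=> q ->; rewrite Etr.
  rewrite (bind_ext (g' := fun _ => bindT (unshift l e) h)); last by move=> _; apply: HEe.
  have He : exc e || (l < idx e).
    case he: (exc e) => //=; have := wf_in (Wf J) (negbT he); move: HJ; rewrite -/e exited_nexc ?he //.
    rewrite /in_range; lia.
  have Hex : exited l (A l C (l+i) J).
    rewrite natA' exited_bind // -/e; case he: (exc e).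
      by rewrite bind_exc // exc_exited.
    move: He; rewrite he /= => hle.
    rewrite exited_bind ?he // /H tensor_id_high //.
    case hh: (exc (h (idx e - l))); first by rewrite exc_exited // shiftT_exc.
    have hie : in_range n (idx e - l).
      have := wf_in (Wf J) (negbT he); move: hle; rewrite -/e /in_range; lia.
    have := wf_in (Hh (idx e - l) hie) (negbT hh).
    case: (h (idx e - l)) hh => [q|r q||] //= _; rewrite /in_range; lia.
  rewrite (CT_fin Hex) natA' unshift_bind; last by rewrite hsi leq_addr orbT.
  rewrite unshift_shift; apply: bind_ext => _.
  case he: (exc e); first by rewrite !bind_exc // unshift_exc.
  move: He; rewrite he /= => hle.
  rewrite unshift_bind; last by rewrite ltnW ?orbT.
  apply: bind_ext => hue.
  rewrite /H tensor_id_high; last first.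
    move: hue hle; rewrite -/e; case: (e) => //= [q|r q] _; lia.
  rewrite addKn unshift_shift.
  by [].
- have E : forall J, A l C (l+i) J = bindT (shiftT l (g i)) (fun _ => A l f (l+a) J).
    move=> J; rewrite natA'; apply: bind_ext => _; apply: bind_same => hne.
    have := Hinf J; rewrite nexited hne /= => hr.
    by rewrite /H tensor_id_low //; move: hr; rewrite /in_range => /andP [].
  have Hinf' : forall J, ~~ exited l (A l C (l+i) J).
    by move=> J; rewrite E exited_bind.
  rewrite (CT_inf (proj2 AC) hi Hinf').
  rewrite (bind_ext (g' := fun _ => bindT (bval (fun J => weight (A l f (l + a) J))) h)); last first.
    by move=> _; rewrite -/a Etr.
  rewrite bind_const_exc ?bind_exc ?bval_exc ?hg //.
  apply: bval_offset (weight (shiftT l (g i))) _ => J.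
  rewrite E weight_bind //; last by rewrite -E; have := Hinf' J; rewrite nexited => /andP [].
Qed.

Lemma weight_bound (w : nat -> R) N : exists B, forall q, q <= N -> (Rabs (w q) <= B)%R.
Proof.
have [m [Mx H]] := fin_bounds w N.
exists (Rmax (Rabs m) (Rabs Mx)) => q hq; have := H q hq.
have := Rmax_l (Rabs m) (Rabs Mx); have := Rmax_r (Rabs m) (Rabs Mx).
have := Rle_abs m; have := Rle_abs (- m); rewrite Rabs_Ropp.
have := Rle_abs Mx; have := Rle_abs (- Mx); rewrite Rabs_Ropp.
move=> *; apply: Rabs_le; lra.
Qed.

Lemma tensor_gen_low a b k g y : y <= a -> tensorS a b k g y = k y.
Proof. by rewrite /tensorS => ->. Qed.

Lemma tensor_gen_high a b k g y : a < y -> tensorS a b k g y = shiftT b (g (y - a)).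
Proof. by move=> h; rewrite /tensorS leqNgt h. Qed.

Lemma tr_dinatural_lem l l' m n f k : is_arrow (l + m) (l' + n) f -> is_arrow l' l k ->
  forall i, in_range m i ->
  trace_at l (compS f (tensorS l' l k (idS n))) i = trace_at l' (compS (tensorS l' l k (idS m)) f) i.
Proof.
move=> Af Ak.
set K := tensorS l' l k (idS n); set K' := tensorS l' l k (idS m).
set L := compS f K; set R := compS K' f.
have AL : is_arrow (l + m) (l + n) L by apply: comp_arrow Af (tensor_arrow Ak (id_arrow n)).
have AR : is_arrow (l' + m) (l' + n) R by apply: comp_arrow (tensor_arrow Ak (id_arrow m)) Af.
have [Hf Rf] := Af; have [Hk Rk] := Ak.
have key : forall y, in_range (l' + n) y -> bindT (K y) (stepf l L) = bindT (stepf l' R y) K.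
  move=> y hy; case: (leqP y l') => hyl.
  - have hyr : in_range l' y by move: hy hyl; rewrite /in_range; lia.
    rewrite /stepf hyr /R compS_bind /K' /K !tensor_gen_low // bind_assoc.
    apply: bind_ext => hne; have := wf_in (Hk y hyr) hne => hr; by rewrite hr.
  - have -> : stepf l' R y = Ix y.
      by rewrite /stepf (_ : in_range l' y = false) //; rewrite /in_range; lia.
    rewrite bind_Ix /K tensor_gen_high //= /stepf.
    by rewrite (_ : in_range l (l + (y - l')) = false) //; rewrite /in_range; lia.
move=> i hi.
have WR : forall J, wf_T (l' + n) (A l' R (l' + i) J).
  move=> J; apply: (A_wf (L := l' + m)) (proj1 AR) _ _ => //; first exact: leq_addr.
  by have /andP [] := in_range_shift l' hi.
have dA : forall J, A l L (l + i) J = bindT (A l' R (l' + i) J) K.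
  elim=> [|J IH].
  - rewrite /= /L /R !compS_bind /K' tensor_gen_high; last by move: hi; rewrite /in_range; lia.
    by rewrite /= addKn.
  - rewrite [A _ L _ J.+1]/= IH [A _ R _ J.+1]/= !bind_assoc; apply: bind_ext => hne.
    apply: key; exact: wf_in (WR J) hne.
case: (trace_cases (proj2 AR) hi) => [[J [HJ ->]]|[Hinf ->]].
- set e := A l' R (l' + i) J.
  have Hex : exited l (A l L (l + i) J) /\ unshift l (A l L (l + i) J) = unshift l' e.
    rewrite dA -/e; case he: (exc e).
      by rewrite bind_exc //; split; [exact: exc_exited | rewrite !unshift_exc].
    have hy := wf_in (WR J) (negbT he); rewrite -/e in hy; move: HJ; rewrite -/e exited_nexc ?he // => hJ.
    have hgt : l' < idx e by move: hy hJ; rewrite /in_range; lia.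
    move: he hgt; case: (e) => //= [y|r y] _ hgt; rewrite /K tensor_gen_high //=;
      split; rewrite ?addKn //; rewrite /in_range; lia.
  case: Hex => Hex <-; exact: CT_fin Hex.
- have Hinf' : forall J, ~~ exited l (A l L (l + i) J).
    move=> J; apply/negP => hx.
    have := Hinf J; rewrite nexited => /andP [hne hr].
    have hk : exc (k (idx (A l' R (l' + i) J))).
      move: hx; rewrite dA exited_bind // /K tensor_gen_low; last by move: hr; rewrite /in_range; lia.
      case hke: (exc (k _)) => //; rewrite exited_nexc ?hke //.
      by rewrite (wf_in (Hk _ hr) (negbT hke)).
    have := Hinf J.+1; rewrite [A _ R _ J.+1]/= exc_exited //.
    rewrite exc_bind /stepf hr.
    set y := idx (A l' R (l' + i) J) in hr hk *.
    have hR : R y = bindT (k y) f.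
      rewrite /R compS_bind /K' tensor_gen_low //; move: hr; rewrite /in_range; lia.
    by rewrite hR bind_exc // hk orbT.
  rewrite (CT_inf (proj2 AL) hi Hinf').
  apply: bval_ext.
  have [B HB] := weight_bound (fun q => weight (k q)) l'.
  apply: (bounded_err (B := B)) => J.
  have := Hinf J; rewrite nexited => /andP [hne hr].
  rewrite dA weight_bind; last by rewrite -dA; have := Hinf' J; rewrite nexited => /andP [].
  rewrite /K tensor_gen_low; last by move: hr; rewrite /in_range; lia.
  have -> : (weight (A l' R (l' + i) J) + weight (k (idx (A l' R (l' + i) J))) - weight (A l' R (l' + i) J) =
             weight (k (idx (A l' R (l' + i) J))))%R by lra.
  apply: HB; move: hr; rewrite /in_range; lia.
Qed.

Lemma A_dichot L f p : (forall J, ~~ exited L (A L f p J)) ->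
  boundedP (fun J => weight (A L f p J)) \/
  exists A0 c, (c < 0)%R /\ forall J, (weight (A L f p J) <= A0 + c * INR J)%R.
Proof.
move=> Hinf.
have Hex : forall J, ~~ exc (A L f p J) && in_range L (idx (A L f p J)).
  move=> J; by rewrite -nexited.
have d1 : forall J, in_range L (idx (A L f p J)).
  by move=> J; have /andP [_ ->] := Hex J.
have d2 : forall J, idx (A L f p J.+1) = idx (f (idx (A L f p J))).
  move=> J; have /andP [hE hr] := Hex J.
  by rewrite [A _ _ _ J.+1]/= idx_bind // /stepf hr.
have d3 : forall J, weight (A L f p J.+1) = (weight (A L f p J) + weight (f (idx (A L f p J))))%R.
  move=> J; have /andP [hE hr] := Hex J; have /andP [hE' _] := Hex J.+1.
  by rewrite [A _ _ _ J.+1]/= weight_bind // /stepf hr.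
exact: (@dichot (fun J => idx (A L f p J)) (fun J => weight (A L f p J)) L
   (fun y => idx (f y)) (fun y => weight (f y)) d1 d2 d3).
Qed.

Lemma lin_unbounded (u : nat -> R) A0 c (sg : nat -> nat) : (c < 0)%R ->
  (forall J, u J <= A0 + c * INR J)%R -> (forall t, t <= sg t) -> ~ boundedP (fun t => u (sg t)).
Proof.
move=> hc Hu Hs [M HM].
have [t ht] := INR_unbounded ((A0 - M) / (- c)).
have h1 : (A0 - M < INR t * (- c))%R.
  have := Rmult_lt_compat_r (- c) _ _ (ltac:(lra)) ht.
  have -> : ((A0 - M) / - c * - c = A0 - M)%R by field; lra.
  done.
have h2 : (INR t <= INR (sg t))%R by apply: le_INR; apply/leP; apply: Hs.
have := HM t; have := Hu (sg t); nra.
Qed.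

Lemma concat L f p J K : ~~ exited L (A L f p J) ->
  A L f p (J + K.+1) = bindT (A L f p J) (fun y => A L f y K).
Proof.
move=> HJ; elim: K => [|K IH].
  rewrite addn1 [A _ _ _ J.+1]/=; apply: bind_ext => hne.
  by move: HJ; rewrite nexited hne /= /stepf => ->.
by rewrite addnS [A _ _ _ (J + K.+1).+1]/= IH bind_assoc.
Qed.

Lemma agree l l' f y K : (forall s, s < K -> ~~ exited l (A l f y s)) ->
  A (l + l') f y K = A l f y K.
Proof.
elim: K => [|K IH] Hs //=.
rewrite IH; last by move=> s hs; apply: Hs; exact: ltnW.
apply: bind_ext => hne; have := Hs K (ltnSn K); rewrite nexited hne /= => hr.
rewrite /stepf hr (_ : in_range (l + l') _ = true) //; apply: in_range_le hr; exact: leq_addr.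
Qed.

Lemma unshift_unshift l l' e : unshift l' (unshift l e) = unshift (l + l') e.
Proof. by case: e => [k|r k||] //=; rewrite subnDA. Qed.

Lemma exited_add l l' e : exited (l + l') e -> exited l e.
Proof. case: e => [k|r k||] //=; rewrite /in_range; lia. Qed.

Lemma weight_unshift l e : weight (unshift l e) = weight e.
Proof. by case: e. Qed.

Lemma exc_unshift l e : exc (unshift l e) = exc e.
Proof. by case: e. Qed.

Lemma idx_unshift l e : idx (unshift l e) = idx e - l.
Proof. by case: e. Qed.

Lemma lin_unbounded2 (u v : nat -> R) A0 c : (c < 0)%R ->
  (forall J, u J <= A0 + c * INR J)%R -> (forall t, exists J, t <= J /\ v t = u J) -> ~ boundedP v.
Proof.
move=> hc Hu Hs [M HM].
have [t ht] := INR_unbounded ((A0 - M) / (- c)).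
have h1 : (A0 - M < INR t * (- c))%R.
  have := Rmult_lt_compat_r (- c) _ _ (ltac:(lra)) ht.
  have -> : ((A0 - M) / - c * - c = A0 - M)%R by field; lra.
  done.
have [J [hJ E]] := Hs t.
have h2 : (INR t <= INR J)%R by apply: le_INR; apply/leP.
have := HM t; rewrite E; have := Hu J; nra.
Qed.

Lemma exited_unshift l l' e : 0 < idx e -> exited (l + l') e -> exited l' (unshift l e).
Proof. case: e => [k|r k||] //=; rewrite /in_range; lia. Qed.

Lemma tr_vanish2_lem l l' m n f : is_arrow (l + l' + m) (l + l' + n) f -> forall i, in_range m i ->
  trace_at (l + l') f i = trace_at l' (fun x => trace_at l f x) i.
Proof.
move=> Af i hi.
have Af' : is_arrow (l + (l' + m)) (l + (l' + n)) f by rewrite !addnA.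
have [Hf Rf] := Af; have [Hf' Rf'] := Af'.
set g := fun x => trace_at l f x.
have Ag : is_arrow (l' + m) (l' + n) g := tr_arrow_lem Af'.
set D := fun J => A (l + l') f (l + l' + i) J.
set O := fun t => A l' g (l' + i) t.
have WD : forall J, wf_T (l + l' + n) (D J).
  move=> J; apply: (A_wf (L := l + l' + m)) Hf _ _ => //; first exact: leq_addr.
  by have /andP [] := in_range_shift (l + l') hi.
have Ey0 : l + (l' + i) = l + l' + i by rewrite addnA.
have Q : forall t, (exists J, [/\ t <= J, exited l (D J) & O t = unshift l (D J)]) \/
    (exc (O t) /\ (exists J0, forall J, J0 <= J -> ~~ exited l (D J)) /\ O t = bval (fun J => weight (D J))).
  elim=> [|t IH].
  - have hx0 : in_range (l' + m) (l' + i) by have /andP [] := in_range_shift l' hi.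
    have -> : O 0 = trace_at l f (l' + i) by [].
    case: (trace_cases Rf' hx0) => [[J [HJ Etr]]|[Hinf Etr]].
    + rewrite Ey0 in HJ Etr.
      have [J0 [_ HJ0 Hs]] := first_exit HJ.
      left; exists J0; split => //.
      * by rewrite /D agree.
      * by rewrite (CT_fin (i:=l'+i) (J:=J0)) ?Ey0 // /D agree.
    + rewrite Ey0 in Hinf Etr.
      have ED : forall J, D J = A l f (l + l' + i) J.
        by move=> J; rewrite /D agree.
      right; split; first by rewrite Etr bval_exc.
      split; first by exists 0 => J _; rewrite ED.
      rewrite Etr; apply: (bval_offset (c := 0%R)) => J; rewrite ED; lra.
  - case: IH => [[J [htJ HJ EO]]|[hexc [[J0 HJ0] Eb]]]; last first.
      right; have E1 : O t.+1 = O t by rewrite /O A_stable1 // -/(O t) exc_exited.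
      by rewrite E1; split => //; split => //; exists J0.
    set e := D J.
    case he: (exc e).
      have E1 : D J.+1 = D J by rewrite /D A_stable1 // exc_exited.
      have E2 : O t.+1 = O t by rewrite /O A_stable1 // -/(O t) exc_exited // EO exc_unshift.
      left; exists J.+1; split => //; by rewrite ?E1 ?E2.
    have hy := wf_in (WD J) (negbT he); rewrite -/e in hy.
    have hyl : l < idx e by move: HJ hy; rewrite -/e exited_nexc ?he // /in_range; lia.
    case: (leqP (idx e) (l + l')) => hyl'; last first.
      have hx : exited (l + l') e by rewrite exited_nexc ?he // /in_range; lia.
      have E1 : D J.+1 = D J by rewrite /D A_stable1.
      have E2 : O t.+1 = O t.
        rewrite /O A_stable1 // -/(O t) EO -/e exited_nexc ?exc_unshift ?he // idx_unshift /in_range; lia.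
      left; exists J.+1; split => //; by rewrite ?E1 ?E2 -?/e.
    set y := idx e in hy hyl hyl'.
    set q := y - l.
    have hq : in_range l' q by rewrite /q /in_range; lia.
    have hq' : in_range (l' + m) q by apply: in_range_le hq; exact: leq_addr.
    have Eq : l + q = y by rewrite /q subnKC //; exact: ltnW.
    have hOt : ~~ exc (O t) /\ idx (O t) = q by rewrite EO -/e exc_unshift he idx_unshift.
    have EO1 : O t.+1 = bindT (O t) (fun _ => g q).
      rewrite /O [A _ _ _ t.+1]/= -/(O t); apply: bind_ext => _; by rewrite hOt.2 /stepf hq.
    have hnD : ~~ exited (l + l') e by rewrite exited_nexc ?he // /in_range; lia.
    have Econ : forall K, D (J + K.+1) = bindT e (fun _ => A (l + l') f y K).
      move=> K; rewrite /D concat //; apply: bind_ext => _; by [].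
    case: (trace_cases Rf' hq') => [[K [HK Etr]]|[Hinf Etr]].
    + rewrite Eq in HK Etr.
      have [K0 [_ HK0 Hs]] := first_exit HK.
      have Etr0 : g q = unshift l (A l f y K0) by rewrite /g (CT_fin (i := q) (J := K0)) ?Eq.
      left; exists (J + K0.+1); split.
      * lia.
      * by rewrite Econ exited_bind ?he // agree.
      * rewrite EO1 Etr0 Econ agree // unshift_bind; last by rewrite ltnW ?orbT.
        by rewrite EO.
    + rewrite Eq in Hinf Etr.
      right; split; first by rewrite EO1 /g Etr bind_const_exc ?bval_exc ?(proj1 hOt).
      split.
        exists J.+1 => J' hJ'.
        have -> : J' = J + (J' - J.+1).+1 by lia.
        by rewrite Econ exited_bind ?he // agree.
      rewrite EO1 /g Etr bind_const_exc ?bval_exc ?(proj1 hOt) //.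
      apply: bval_ext; rewrite (bounded_tail (fun J => weight (D J)) J.+1).
      apply: (bounded_err (B := Rabs (weight e))) => K.
      rewrite addSnnS Econ weight_bind ?he //; last first.
        by rewrite exc_bind negb_or he /= agree //; have := Hinf K; rewrite nexited => /andP [].
      rewrite agree //.
      have -> : (weight (A l f y K) - (weight e + weight (A l f y K)) = - weight e)%R by lra.
      rewrite Rabs_Ropp; exact: Rle_refl.
case: (classic (exists J, exited (l + l') (D J))) => [[J HJ]|Hn].
  rewrite (CT_fin HJ) -/(D J).
  case: (Q J) => [[J' [hJJ' HJ' EO]]|[_ [[J0 HJ0] _]]]; last first.
    exfalso; have := HJ0 (maxn J J0) (leq_maxr _ _).
    rewrite /D (A_stable_le (leq_maxl J J0) HJ) -/(D J); by rewrite (exited_add HJ).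
  have EJ : D J' = D J by rewrite /D (A_stable_le hJJ' HJ).
  rewrite EJ in EO.
  have hxO : exited l' (O J).
    rewrite EO; case he: (exc (D J)); first by rewrite exc_exited // exc_unshift.
    apply: exited_unshift => //; have := wf_in (WD J) (negbT he); rewrite /in_range; lia.
  by rewrite (CT_fin hxO) -/(O J) EO unshift_unshift.
have Hinf : forall J, ~~ exited (l + l') (D J).
  move=> J; apply/negP => h; apply: Hn; by exists J.
rewrite (CT_inf Rf hi Hinf).
case: (classic (exists t, exc (O t))) => [[t ht]|Hno].
  case: (Q t) => [[J [_ _ EO]]|[_ [_ Eb]]].
    exfalso; move: ht; rewrite EO exc_unshift => h; have := Hinf J; by rewrite exc_exited.
  rewrite (CT_fin (J := t)) -/(O t); last by rewrite -/(O t) exc_exited.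
  by rewrite Eb unshift_exc ?bval_exc.
have Qa : forall t, exists J, [/\ t <= J, ~~ exc (D J), in_range l' (idx (O t)), ~~ exc (O t) & O t = unshift l (D J)].
  move=> t; case: (Q t) => [[J [htJ HJ EO]]|[hx _]]; last first.
    by exfalso; apply: Hno; exists t.
  have := Hinf J; rewrite nexited => /andP [he hr].
  exists J; split => //; rewrite EO ?exc_unshift //.
  by rewrite idx_unshift; move: HJ hr; rewrite exited_nexc // /in_range; lia.
have HinfO : forall t, ~~ exited l' (O t).
  by move=> t; have [J [_ _ hr he _]] := Qa t; rewrite nexited he hr.
rewrite (CT_inf (proj2 Ag) hi HinfO).
apply: bval_ext; split.
  move=> [M HM]; exists M => t; rewrite -/(O t); have [J [_ _ _ _ ->]] := Qa t; rewrite weight_unshift; exact: HM.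
move=> HbO; case: (A_dichot Hinf) => // [[A0 [c [hc Hl]]]].
exfalso; apply: (lin_unbounded2 hc Hl _ HbO) => t.
have [J [htJ _ _ _ E]] := Qa t; exists J; split => //.
by rewrite -/(O t) E weight_unshift.
Qed.

Lemma tr_ext l m n f f' : is_arrow (l+m) (l+n) f -> (forall x, in_range (l+m) x -> f x = f' x) ->
  forall i, in_range m i -> trace_at l f i = trace_at l f' i.
Proof.
move=> [Hf Rf] E i hi.
have /andP [h0 _] := in_range_shift l hi.
have EA : forall J, A l f (l+i) J = A l f' (l+i) J.
  elim=> [|J IH] /=; first exact: E.
  rewrite IH; apply: bind_ext => _; rewrite /stepf; case: ifP => // h.
  apply: E; apply: in_range_le h; exact: leq_addr.
case: (trace_cases Rf hi) => [[J [HJ ->]]|[Hinf ->]].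
  by rewrite EA (CT_fin (J := J)) // -EA.
rewrite (CT_inf (realizable_ext E Rf) hi); last by move=> J; rewrite -EA.
by apply: (bval_offset (c := 0%R)) => J; rewrite EA; lra.
Qed.

Lemma bind_shiftT l e G : bindT (shiftT l e) G = bindT e (fun j => G (l + j)).
Proof. by case: e. Qed.

Lemma shiftT_bind n e g : shiftT n (bindT e g) = bindT e (fun j => shiftT n (g j)).
Proof. case: e => [j|r j||] //=; by case: (g j). Qed.

Lemma bind_shift_ix c e : bindT e (fun j => Ix (c + j)) = shiftT c e.
Proof. by case: e. Qed.

Lemma shiftT_add a b e : shiftT (a + b) e = shiftT a (shiftT b e).
Proof. case: e => [j|r j||] //=; by rewrite addnA. Qed.

Lemma shiftT0 e : shiftT 0 e = e.
Proof. by case: e. Qed.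

Lemma unshift0 e : unshift 0 e = e.
Proof. case: e => [j|r j||] //=; by rewrite subn0. Qed.

Lemma unshift_shiftT2 l n e : unshift l (shiftT (l + n) e) = shiftT n e.
Proof. case: e => [j|r j||] //=; by rewrite -addnA addKn. Qed.

Lemma ir m i : in_range m i -> 0 < i /\ i <= m.
Proof. by move/andP. Qed.

Lemma sigma_low m n i : i <= m -> sigmaS m n i = Ix (n + i).
Proof. by rewrite /sigmaS => ->. Qed.
Lemma sigma_high m n i : m < i -> sigmaS m n i = Ix (i - m).
Proof. by move=> h; rewrite /sigmaS leqNgt h. Qed.

Lemma exited0 e : exited 0 e.
Proof. case: e => [k|r k||] //=; rewrite /in_range; lia. Qed.

Theorem propositionD2 :
  is_traced_smc is_arrow eq_arrow idS compS tensorS sigmaS trS.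
Proof.
constructor.
- by move=> m f i.
- move=> m f g H i hi; by rewrite H.
- move=> m f g h H1 H2 i hi; by rewrite H1 ?H2.
- move=> m n f g Hf E; exact: arrow_ext E Hf.
- exact: id_arrow.
- move=> m l n f g; exact: comp_arrow.
- move=> m l n f f' g g' [Hf _] _ Ef Eg i hi; rewrite !compS_bind -Ef //.
  apply: bind_ext => hne; apply: Eg; exact: wf_in (Hf i hi) hne.
- by move=> m n f _ i.
- move=> m n f _ i _; by rewrite compS_bind bind_ret.
- move=> m l k n f g h _ _ _ i _; by rewrite !compS_bind bind_assoc.
- move=> m n m' n' f g; exact: tensor_arrow.
- move=> m n m' n' f f' g g' _ _ Ef Eg i hi; rewrite /tensorS; case: ifP => h.
  + apply: Ef; move: hi h; rewrite /in_range; lia.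
  + congr shiftT; apply: Eg; move: hi h; rewrite /in_range; lia.
- move=> m m' i hi; rewrite /tensorS /idS; case: ifP => h //=; congr Ix; move: hi h; rewrite /in_range; lia.
- move=> m l n m' l' n' f g f' g' [Hf _] _ [Hf' _] _ i hi.
  case: (leqP i m) => h.
  + have hi' : in_range m i by move: hi h; rewrite /in_range; lia.
    rewrite tensor_gen_low // !compS_bind tensor_gen_low //; apply: bind_ext => hne.
    rewrite tensor_gen_low //; have := wf_in (Hf i hi') hne; rewrite /in_range; lia.
  + have hi' : in_range m' (i - m) by move: hi h; rewrite /in_range; lia.
    rewrite tensor_gen_high // !compS_bind tensor_gen_high // bind_shiftT shiftT_bind.
    apply: bind_ext => hne; rewrite tensor_gen_high ?addKn //.
    have := wf_in (Hf' _ hi') hne; rewrite /in_range; lia.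
- move=> m n m' n' m'' n'' f g h _ _ _ i hi.
  case: (leqP i m) => h1.
  + by rewrite !tensor_gen_low //; apply: leq_trans h1 (leq_addr _ _).
  case: (leqP i (m + m')) => h2.
  + rewrite tensor_gen_low // tensor_gen_high // tensor_gen_high // tensor_gen_low //; lia.
  + rewrite tensor_gen_high // tensor_gen_high // tensor_gen_high; last lia.
    by rewrite shiftT_add subnDA.
- move=> m n f _ i hi; rewrite tensor_gen_high ?subn0 ?shiftT0 //; move: hi; rewrite /in_range; lia.
- move=> m n f _ i hi; rewrite tensor_gen_low //; move: hi; rewrite /in_range; lia.
- exact: sigma_arrow.
- move=> m n m' n' f g [Hf _] [Hg _] i hi; rewrite !compS_bind.
  case: (leqP i m) => h.
  + have hi' : in_range m i by move: hi h; rewrite /in_range; lia.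
    rewrite tensor_gen_low // sigma_low // bind_Ix tensor_gen_high; last by move: hi'; rewrite /in_range; lia.
    rewrite addKn -bind_shift_ix; apply: bind_ext => hne.
    rewrite sigma_low //; have := wf_in (Hf i hi') hne; rewrite /in_range; lia.
  + have hi' : in_range m' (i - m) by move: hi h; rewrite /in_range; lia.
    rewrite tensor_gen_high // sigma_high // bind_Ix tensor_gen_low; last by move: hi'; rewrite /in_range; lia.
    rewrite bind_shiftT -{2}(bind_ret (g (i - m))); apply: bind_ext => hne.
    rewrite sigma_high ?addKn //; have := wf_in (Hg _ hi') hne; rewrite /in_range; lia.
- move=> m n i hi; rewrite compS_bind /idS; case: (leqP i m) => h.
  + rewrite sigma_low // bind_Ix sigma_high ?addKn //; move: hi; rewrite /in_range; lia.
  + rewrite sigma_high // bind_Ix sigma_low ?subnKC //; try lia; move: hi; rewrite /in_range; lia.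
- move=> m n p i hi; rewrite compS_bind.
  case: (leqP i m) => h1.
  + have -> : sigmaS m (n + p) i = Ix (n + p + i) by rewrite sigma_low.
    have -> : tensorS (m + n) (n + m) (sigmaS m n) (idS p) i = Ix (n + i).
      rewrite tensor_gen_low ?sigma_low //; lia.
    rewrite bind_Ix tensor_gen_high; last (move: hi; rewrite /in_range; lia).
    rewrite addKn sigma_low //=; by rewrite addnA.
  case: (leqP i (m + n)) => h2.
  + have -> : sigmaS m (n + p) i = Ix (i - m) by rewrite sigma_high.
    have -> : tensorS (m + n) (n + m) (sigmaS m n) (idS p) i = Ix (i - m).
      by rewrite tensor_gen_low // sigma_high.
    rewrite bind_Ix tensor_gen_low //; lia.
  + have -> : sigmaS m (n + p) i = Ix (i - m) by rewrite sigma_high //; lia.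
    have -> : tensorS (m + n) (n + m) (sigmaS m n) (idS p) i = Ix (n + m + (i - (m + n))).
      by rewrite tensor_gen_high.
    rewrite bind_Ix tensor_gen_high; last lia.
    rewrite sigma_high; last lia.
    simpl; congr Ix; lia.
- move=> l m n f; exact: tr_arrow_lem.
- move=> l m n f f' Af E i hi; exact: tr_ext Af E i hi.
- move=> l m n m' n' f g h Af Ag Ah i hi; exact: tr_natural_lem Af Ag Ah i hi.
- move=> l l' m n f k Af Ak i hi; exact: tr_dinatural_lem Af Ak i hi.
- move=> m n f [Hf _] i hi; rewrite /trS (CT_fin (J:=0)) ?exited0 //= unshift0 add0n //.
- move=> l l' m n f Af i hi; exact: tr_vanish2_lem Af i hi.
- move=> l m n m' n' f g Af [Hg _] i hi; rewrite /trS.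
  case: (leqP i m) => h.
  + rewrite tensor_gen_low //; apply: (tr_ext Af) => [x hx|]; last by move: hi h; rewrite /in_range; lia.
    by rewrite tensor_gen_low //; move: hx; rewrite /in_range; lia.
  + have hi' : in_range m' (i - m) by move: hi h; rewrite /in_range; lia.
    have E0 : A l (tensorS (l + m) (l + n) f g) (l + i) 0 = shiftT (l + n) (g (i - m)).
      by rewrite /= tensor_gen_high ?subnDl //; lia.
    rewrite tensor_gen_high // (CT_fin (J := 0)) E0 ?unshift_shiftT2 //.
    case he: (exc (g (i - m))); first by rewrite exc_exited // shiftT_exc.
    rewrite exited_nexc ?shiftT_exc ?he // shiftT_nexc_idx ?he //.
    have := wf_in (Hg _ hi') (negbT he); rewrite /in_range; lia.
- move=> l i hi; rewrite /trS (CT_fin (J := 1)) /=.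
  + rewrite sigma_high; last (move: hi; rewrite /in_range; lia).
    rewrite addKn bind_Ix /stepf hi sigma_low; last (move: hi; rewrite /in_range; lia).
    by rewrite /= addKn.
  + rewrite sigma_high; last (move: hi; rewrite /in_range; lia).
    rewrite addKn bind_Ix /stepf hi sigma_low /=; last (move: hi; rewrite /in_range; lia).
    move: hi; rewrite /in_range; lia.
Qed.
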